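(* Let $A\in\mathbb{R}^{m\times n}_+$ with every row containing a positive entry, $(r,c)\in\mathbb{R}^m_{++}\times\mathbb{R}^n_{++}$ with $\langle r,1_m\rangle=\langle c,1_n\rangle$, $y\in\mathbb{R}^n_{++}$, and let $\emptyset\ne T\subsetneq[n]$ have margin $\gamma>0$. Let $h:=h^{A,r,y}_T$. If $\sum_{i\in N(T)}r_i\ge\sum_{j\in T}c_j$, then for any $\delta\in[0,\gamma)$ there is a finite solution $\alpha<\infty$ to the equation $h(\alpha)=h(1)+\delta$.
   Context: $N(T):=\{i\in[m]:\exists j\in T,\ A_{ij}>0\}$. For $y\in\mathbb{R}^n_{++}$ define $c^{A,r}_j(y):=\sum_{i\in[m]}r_i\frac{A_{ij}y_j}{\sum_{k\in[n]}A_{ik}y_k}$ (the column sums after row-normalizing $A\,\mathrm{diag}(y)$ to row sums $r$). The margin of $T$ is the largest $\gamma\ge0$ such that some $\nu\in\mathbb{R}$ satisfies $\max_{j\in T}(c^{A,r}_j(y)-c_j)\le\nu-\gamma\le\nu+\gamma\le\min_{j\notin T}(c^{A,r}_j(y)-c_j)$. The proxy function is $h^{A,r,y}_T(\alpha):=\sum_{j\in T}c^{A,r}_j(y\circ(1_{\bar T}+\alpha1_T))=\sum_{i\in N(T)}r_i\frac{\alpha\mu_i}{1+(\alpha-1)\mu_i}$ with $\mu_i:=\frac{\sum_{j\in T}A_{ij}y_j}{\sum_{j\in[n]}A_{ij}y_j}$, where $\bar T=[n]\setminus T$, $1_T$ is the indicator of $T$, $\circ$ the entrywise product. *)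

(* Defs.v *)
From mathcomp Require Import all_boot all_order all_algebra.
From mathcomp Require Import reals.
Set Implicit Arguments. Unset Strict Implicit. Unset Printing Implicit Defensive.
Import Order.TTheory GRing.Theory Num.Theory.
Local Open Scope ring_scope.

Section Defs.
Variables (R : realType) (m n : nat).

Definition Nset (A : 'M[R]_(m, n)) (T : {set 'I_n}) : {set 'I_m} :=
  [set i | [exists j in T, 0 < A i j]].

(* c^{A,r}_j(y) : column sums after row-normalizing A diag(y) to row sums r *)
Definition colsum (A : 'M[R]_(m, n)) (r : 'I_m -> R) (y : 'I_n -> R)
  (j : 'I_n) : R :=
  \sum_(i < m) r i * (A i j * y j / \sum_(k < n) A i k * y k).

Definition margin_feasible (A : 'M[R]_(m, n)) (r : 'I_m -> R) (c y : 'I_n -> R)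
  (T : {set 'I_n}) (g : R) : Prop :=
  0 <= g /\ exists nu : R,
    (forall j, j \in T -> colsum A r y j - c j <= nu - g) /\
    nu - g <= nu + g /\
    (forall j, j \notin T -> nu + g <= colsum A r y j - c j).

Definition is_margin (A : 'M[R]_(m, n)) (r : 'I_m -> R) (c y : 'I_n -> R)
  (T : {set 'I_n}) (g : R) : Prop :=
  margin_feasible A r c y T g /\
  (forall g', margin_feasible A r c y T g' -> g' <= g).

Definition proxy_h (A : 'M[R]_(m, n)) (r : 'I_m -> R) (y : 'I_n -> R)
  (T : {set 'I_n}) (alpha : R) : R :=
  \sum_(j in T)
     colsum A r (fun k => y k * (if k \in T then alpha else 1)) j.

End Defs.

(* Main.v *)
Require Import Defs.
From mathcomp Require Import all_boot all_order all_algebra.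
From mathcomp Require Import all_classical all_reals all_analysis.
From mathcomp Require Import all_boot all_order all_algebra.
From mathcomp Require Import reals.
From mathcomp Require Import ring lra.
Import Order.TTheory GRing.Theory Num.Theory.
Import numFieldNormedType.Exports.
Local Open Scope ring_scope.

Section Helpers.
Variable R : realType.

Lemma cont_sum (I : finType) (P : pred I) (F : I -> R -> R) (x : R) :
  (forall i, {for x, continuous (F i)}) ->
  {for x, continuous (fun a : R => \sum_(i | P i) F i a)}.
Proof.
move=> hF; rewrite /index_enum; elim: (Finite.enum I) => [|i s IH].
  have -> : (fun a : R => \sum_(i <- [::] | P i) F i a) = (fun=> 0).
    by apply: funext => a; rewrite big_nil.
  exact: cvg_cst.
have -> : (fun a : R => \sum_(j <- i :: s | P j) F j a) =
   (fun a : R => (if P i then F i a else 0) + \sum_(j <- s | P j) F j a).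
  by apply: funext => a; rewrite big_cons; case: (P i); rewrite ?add0r.
apply: (@continuousD _ _ _ (fun a : R => if P i then F i a else 0)) => //.
case: (P i) => //; exact: cvg_cst.
Qed.

Lemma term_cont (rr S U x : R) : 0 < x * S + U ->
  {for x, continuous (fun a : R => rr * (a * S / (a * S + U)))}.
Proof.
move=> hx.
have hid : {for x, continuous (fun a : R => a)} by exact: cvg_id.
have hc : forall k : R, {for x, continuous (fun _ : R => k)} by move=> k; exact: cvg_cst.
have h1 : {for x, continuous (fun a : R => a * S)}.
  exact: (@continuousM _ _ (fun a : R => a) (fun _ : R => S)).
have h2 : {for x, continuous (fun a : R => a * S + U)}.
  exact: (@continuousD _ _ _ (fun a : R => a * S) (fun _ : R => U)).
have h3 : {for x, continuous (fun a : R => (a * S + U)^-1)}.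
  apply: (@continuousV _ _ (fun a : R => a * S + U)) => //.
  by rewrite gt_eqF.
have h4 : {for x, continuous (fun a : R => a * S / (a * S + U))}.
  exact: (@continuousM _ _ (fun a : R => a * S) (fun a : R => (a * S + U)^-1)).
exact: (@continuousM _ _ (fun _ : R => rr) (fun a : R => a * S / (a * S + U))).
Qed.

End Helpers.
Section Alg.
Variables (R : realType) (m n : nat) (A : 'M[R]_(m, n)) (r : 'I_m -> R) (y : 'I_n -> R) (T : {set 'I_n}).

Definition SS i := \sum_(k in T) A i k * y k.
Definition UU i := \sum_(k | k \notin T) A i k * y k.

Lemma proxy_eq a : proxy_h A r y T a =
  \sum_(i < m) r i * (a * SS i / (a * SS i + UU i)).
Proof.
rewrite /proxy_h /colsum exchange_big /=; apply: eq_bigr => i _.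
have -> : \sum_(k < n) A i k * (y k * (if k \in T then a else 1)) = a * SS i + UU i.
  rewrite (bigID (fun k => k \in T)) /= /SS /UU mulr_sumr; congr (_ + _).
    by apply: eq_bigr => k /= kT; rewrite kT; ring.
  by apply: eq_bigr => k /= /negbTE kT; rewrite kT mulr1.
rewrite -mulr_sumr; congr (_ * _); rewrite /SS mulr_sumr mulr_suml.
by apply: eq_bigr => j /= jT; rewrite jT; ring.
Qed.

Lemma h1_eq : proxy_h A r y T 1 = \sum_(j in T) colsum A r y j.
Proof.
rewrite /proxy_h /colsum; apply: eq_bigr => j _; apply: eq_bigr => i _.
rewrite if_same mulr1; congr (_ * (_ / _)).
by apply: eq_bigr => k _; rewrite if_same mulr1.
Qed.

Hypothesis A0 : forall i j, 0 <= A i j.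
Hypothesis y0 : forall j, 0 < y j.
Hypothesis Arow : forall i, exists j, 0 < A i j.

Lemma rowpos i : 0 < \sum_(k < n) A i k * y k.
Proof.
have [j hj] := Arow i.
rewrite (bigD1 j) //= ltr_pwDl ?mulr_gt0 //.
by apply: sumr_ge0 => k _; rewrite mulr_ge0 // ltW.
Qed.

Lemma SSUU i : SS i + UU i = \sum_(k < n) A i k * y k.
Proof. by rewrite [RHS](bigID (fun k => k \in T)). Qed.

Lemma SS0 i : 0 <= SS i.
Proof. by apply: sumr_ge0 => k _; rewrite mulr_ge0 // ltW. Qed.
Lemma UU0 i : 0 <= UU i.
Proof. by apply: sumr_ge0 => k _; rewrite mulr_ge0 // ltW. Qed.

Lemma Dpos a i : 0 < a -> 0 < a * SS i + UU i.
Proof.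
move=> a0; have := rowpos i; rewrite -SSUU => h.
have := SS0 i; rewrite le0r => /orP[/eqP s0|s0].
  by rewrite s0 mulr0 add0r; rewrite s0 add0r in h.
by rewrite ltr_pwDl ?mulr_gt0 ?UU0.
Qed.

Lemma colsum_total : \sum_(j < n) colsum A r y j = \sum_(i < m) r i.
Proof.
rewrite /colsum exchange_big /=; apply: eq_bigr => i _.
rewrite -mulr_sumr -mulr_suml divff ?mulr1 //.
by rewrite gt_eqF // rowpos.
Qed.

End Alg.
Arguments SS {R m n}.
Arguments UU {R m n}.

Lemma lowb (R : realType) (rr S U a : R) : 0 < rr -> 0 < S -> 0 <= U -> 0 < a ->
  rr - (rr * U / S) / a <= rr * (a * S / (a * S + U)).
Proof.
move=> r0 S0 U0 a0.
have hD : a * S + U != 0 by rewrite gt_eqF // ltr_pwDl ?mulr_gt0.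
have -> : rr * (a * S / (a * S + U)) =
  rr - (rr * U / S) / a + rr * U ^+ 2 / (a * S * (a * S + U)).
  by field; rewrite hD !gt_eqF.
have hP : 0 < a * S + U by rewrite ltr_pwDl ?mulr_gt0.
rewrite lerDl; apply: divr_ge0.
  by apply: mulr_ge0; [exact: ltW | exact: exprn_ge0].
by apply: ltW; apply: mulr_gt0 => //; apply: mulr_gt0.
Qed.

Lemma SS_N {R : realType} {m n} {A : 'M[R]_(m, n)} {y : 'I_n -> R} T i :
  (forall i j, 0 <= A i j) -> (forall j, 0 < y j) ->
  (i \in Nset A T -> 0 < SS A y T i) /\ (i \notin Nset A T -> SS A y T i = 0).
Proof.
move=> A0 y0; rewrite /Nset inE; split.
  case/existsP=> j /andP[jT hj]; rewrite /SS (bigD1 j) //= ltr_pwDl ?mulr_gt0 //.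
  by apply: sumr_ge0 => k _; rewrite mulr_ge0 // ltW.
move=> /existsPn h; rewrite /SS big1 // => k kT.
have := h k; rewrite kT /= => hk.
have -> : A i k = 0 by apply/eqP; rewrite eq_le A0 andbT leNgt.
by rewrite mul0r.
Qed.

Theorem proposition6p9 (R : realType) (m n : nat) (A : 'M[R]_(m, n))
  (r : 'I_m -> R) (c y : 'I_n -> R) (T : {set 'I_n}) (gamma : R) :
  (forall i j, 0 <= A i j) ->
  (forall i, exists j, 0 < A i j) ->
  (forall i, 0 < r i) ->
  (forall j, 0 < c j) ->
  \sum_(i < m) r i = \sum_(j < n) c j ->
  (forall j, 0 < y j) ->
  T != set0 -> T != [set: 'I_n] ->
  is_margin A r c y T gamma -> 0 < gamma ->
  \sum_(i in Nset A T) r i >= \sum_(j in T) c j ->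
  forall delta : R, 0 <= delta -> delta < gamma ->
  exists alpha : R, 0 < alpha /\
    proxy_h A r y T alpha = proxy_h A r y T 1 + delta.
Proof.
move=> A0 Arow r0 c0 hsum y0 Tn0 TnT [[g0 [nu [hT [_ hTc]]]] _] gpos hN delta d0 dg.
pose F j := colsum A r y j - c j.
have Ftot : \sum_(j < n) F j = 0.
  by rewrite /F sumrB colsum_total // hsum subrr.
have key : \sum_(j in T) F j <= - gamma.
  case/set0Pn: Tn0 => j0 j0T.
  case: (lerP nu 0) => hnu.
    rewrite (bigD1 j0) //=.
    have : \sum_(j in T | j != j0) F j <= 0.
      rewrite -oppr_ge0 -sumrN; apply: sumr_ge0 => j /andP[jT _].
      have := hT j jT; rewrite /F; lra.
    have := hT j0 j0T; rewrite /F; lra.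
  have [j1 j1T] : exists j1, j1 \notin T.
    apply/existsP; apply: contraNT TnT => /existsPn h.
    by apply/eqP/setP => j; rewrite inE; have := h j; rewrite negbK.
  have : gamma <= \sum_(j | j \notin T) F j.
    rewrite (bigD1 j1) //=.
    have : 0 <= \sum_(j | (j \notin T) && (j != j1)) F j.
      by apply: sumr_ge0 => j /andP[jT _]; have := hTc j jT; rewrite /F; lra.
    have := hTc j1 j1T; rewrite /F; lra.
  move: Ftot; rewrite (bigID (fun j => j \in T)) /=; lra.
have h1 : proxy_h A r y T 1 = \sum_(j in T) colsum A r y j by rewrite h1_eq.
have hFT : \sum_(j in T) F j = \sum_(j in T) colsum A r y j - \sum_(j in T) c j.
  by rewrite /F sumrB.
pose v := proxy_h A r y T 1 + delta.
pose NR := \sum_(i in Nset A T) r i.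
have vNR : v < NR by rewrite /v /NR h1; lra.
pose f a := \sum_(i < m) r i * (a * SS A y T i / (a * SS A y T i + UU A y T i)).
have hf : forall a, proxy_h A r y T a = f a by move=> a; rewrite proxy_eq.
pose K := \sum_(i in Nset A T) (r i * UU A y T i / SS A y T i) .
pose eps := NR - v.
have eps0 : 0 < eps by rewrite /eps; lra.
have K0 : 0 <= K.
  apply: sumr_ge0 => i iN; have [hS _] := SS_N T i A0 y0.
  by rewrite divr_ge0 ?mulr_ge0 ?UU0 ?ltW ?hS.
pose b := 1 + K / eps.
have b1 : 1 <= b by rewrite /b lerDl divr_ge0 // ltW.
have b0 : 0 < b by lra.
have fb : v <= f b.
  rewrite /f (bigID (fun i => i \in Nset A T)) /= [X in _ + X]big1 ?addr0; last first.
    move=> i iN; have [_ hS] := SS_N T i A0 y0.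
    by rewrite hS // !mulr0 mul0r mulr0.
  apply: (@le_trans _ _ (\sum_(i in Nset A T) (r i - (r i * UU A y T i / SS A y T i) / b))).
    rewrite sumrB -mulr_suml -/NR -/K.
    have : K / b <= eps.
      rewrite ler_pdivrMr // /b.
      have -> : eps * (1 + K / eps) = eps + K by field; rewrite gt_eqF.
      lra.
    rewrite /eps; lra.
  apply: ler_sum => i iN; have [hS _] := SS_N T i A0 y0.
  by apply: lowb => //; [rewrite hS | rewrite UU0].
have f1 : f 1 <= v by rewrite /v hf; lra.
have fcont : {within `[1, b], continuous f}%classic.
  apply: continuous_in_subspaceT => x hx; move/set_mem: hx => /=; rewrite in_itv /= => /andP[x1 _]; rewrite /f.
  apply: cont_sum => i; apply: term_cont; apply: Dpos => //; lra.
have hv : Num.min (f 1) (f b) <= v <= Num.max (f 1) (f b).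
  by rewrite ge_min le_max f1 fb orbT.
have [a ain fa] := IVT b1 fcont hv.
move: ain; rewrite in_itv /= => /andP[a1 _].
exists a; split; first lra.
by rewrite hf fa.
Qed.
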